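(* Let $X$ be a $\delta$-hyperbolic graph, $\mathcal Y$ a collection of $K$-quasiconvex subsets of $X$ which is $M_0$-geometrically separated, and $\hat X$ the cone-off of $X$ with respect to $\mathcal Y$. There exists a constant $C=C(\delta,K,M_0)$, bounded linearly in $M_0$, such that for every $Y\in\mathcal Y$ and all $x,y\in\hat X\setminus\{v_Y\}$, if an $\hat X$-geodesic $\gamma$ from $x$ to $y$ does not pass through $v_Y$, then $\mathsf d^\pi_Y(x,y)\le C$.
   Context: $X$ is a geodesic simplicial graph whose points are vertices, $\delta$-hyperbolic (for all $x,y,z$, $[x,y]\subseteq\mathcal N_\delta([x,z]\cup[z,y])$, $\mathcal N_R$ closed $R$-neighborhood). $Y$ is $K$-quasiconvex if every geodesic between points of $Y$ lies in $\mathcal N_K(Y)$. $\mathcal Y$ is $M_0$-geometrically separated if $\mathrm{diam}(\mathcal N_{2K+2\delta}(Y')\cap Y)\le M_0$ for distinct $Y,Y'\in\mathcal Y$. The cone-off $\hat X$ is obtained from $X$ by adding, for each $Y\in\mathcal Y$, a vertex $v_Y$ joined by an edge to every vertex of $Y$. For $z\in X$, $\pi_Y(z)=\{y\in Y:\mathsf d_X(z,Y)=\mathsf d_X(z,y)\}$; for $U\in\mathcal Y\setminus\{Y\}$, $\pi_Y(v_U):=\pi_Y(U)=\bigcup_{u\in U}\pi_Y(u)$. For $x,y\in\hat X\setminus\{v_Y\}$, $\mathsf d^\pi_Y(x,y)=\mathrm{diam}(\pi_Y(x)\cup\pi_Y(y))$ (diameter in $X$). A quantity depending on constants $c_1,\dots,c_n$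 and $M_0$ is bounded linearly in $M_0$ if it is at most $a(c_1,\dots,c_n)M_0+b(c_1,\dots,c_n)$ in absolute value for some positive functions $a,b$. *)

(* Defs.v *)
(* Distances are expressed through the predicate
   [dist_le e x y n] ("d(x,y) <= n"). *)
From mathcomp Require Import all_boot.

Set Implicit Arguments.
Unset Strict Implicit.
Unset Printing Implicit Defensive.

Section Graphs.
Variables (T : Type) (e : T -> T -> Prop).

(* [walk x p]: x, p_1, ..., p_k is an edge path starting at x; its
   length is [size p] and its endpoint is [last x p]. *)
Fixpoint walk (x : T) (p : seq T) : Prop :=
  match p with
  | [::] => True
  | y :: q => e x y /\ walk y q
  end.

Fixpoint mem_list (v : T) (s : seq T) : Prop :=
  match s with
  | [::] => False
  | x :: s' => v = x \/ mem_list v s'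
  end.

Definition on_path (v x : T) (p : seq T) : Prop := v = x \/ mem_list v p.

Definition dist_le (x y : T) (n : nat) : Prop :=
  exists p, walk x p /\ last x p = y /\ size p <= n.

Definition connected : Prop := forall x y, exists n, dist_le x y n.

Definition geodesic (x : T) (p : seq T) (y : T) : Prop :=
  walk x p /\ last x p = y /\
  forall q, walk x q -> last x q = y -> size p <= size q.

Definition nbhd (S : T -> Prop) (R : nat) (v : T) : Prop :=
  exists s, S s /\ dist_le v s R.

Definition diam_le (S : T -> Prop) (C : nat) : Prop :=
  forall a b, S a -> S b -> dist_le a b C.

Definition hyperbolic (delta : nat) : Prop :=
  forall x y z pxy pxz pzy,
    geodesic x pxy y -> geodesic x pxz z -> geodesic z pzy y ->
    forall v, on_path v x pxy ->
      nbhd (fun w => on_path w x pxz \/ on_path w z pzy) delta v.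

Definition quasiconvex (K : nat) (Y : T -> Prop) : Prop :=
  forall x y p, Y x -> Y y -> geodesic x p y ->
    forall v, on_path v x p -> nbhd Y K v.

Definition proj (Y : T -> Prop) (z y : T) : Prop :=
  Y y /\ forall y', Y y' -> forall n, dist_le z y' n -> dist_le z y n.

Definition geometrically_separated (delta K M0 : nat)
    (Ycol : (T -> Prop) -> Prop) : Prop :=
  forall Y Y', Ycol Y -> Ycol Y' -> Y <> Y' ->
    diam_le (fun v => Y v /\ nbhd Y' (2 * K + 2 * delta) v) M0.

End Graphs.

Section ConeOff.
Variables (V : Type) (adj : V -> V -> Prop) (Ycol : (V -> Prop) -> Prop).

Definition coll := {Y : V -> Prop | Ycol Y}.

(* vertices of hat X: vertices of X plus one cone vertex v_Y per Y *)
Definition cone_vertex := (V + coll)%type.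

Definition cone_adj (a b : cone_vertex) : Prop :=
  match a, b with
  | inl u, inl v => adj u v
  | inl u, inr Y => sval Y u
  | inr Y, inl u => sval Y u
  | inr _, inr _ => False
  end.

Definition proj_hat (Y : V -> Prop) (x : cone_vertex) : V -> Prop :=
  match x with
  | inl z => proj adj Y z
  | inr U => fun y => exists u, sval U u /\ proj adj Y u y
  end.

Definition dpi_le (Y : V -> Prop) (x y : cone_vertex) (C : nat) : Prop :=
  diam_le adj (fun w => proj_hat Y x w \/ proj_hat Y y w) C.

End ConeOff.

(* Main.v *)
Require Import Defs.
From mathcomp Require Import all_boot zify.
From Stdlib Require Import ClassicalEpsilon ProofIrrelevance Classical.

Set Implicit Arguments.
Unset Strict Implicit.
Unset Printing Implicit Defensive.


Section Basic.
Variables (T : Type) (e : T -> T -> Prop).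

Lemma walk_cat x p q : walk e x (p ++ q) <-> walk e x p /\ walk e (last x p) q.
Proof.
elim: p x => [|a p IH] x /=; first by tauto.
rewrite IH; tauto.
Qed.

Lemma dl_refl x : dist_le e x x 0.
Proof. by exists [::]. Qed.

Lemma dl_mono x y n m : dist_le e x y n -> n <= m -> dist_le e x y m.
Proof. move=> [p [Hw [Hl Hs]]] Hnm; exists p; split=> //; split=> //; lia. Qed.

Lemma dl_trans x y z n m : dist_le e x y n -> dist_le e y z m -> dist_le e x z (n + m).
Proof.
move=> [p [Hw [Hl Hs]]] [q [Hw' [Hl' Hs']]].
exists (p ++ q); split; first by apply/walk_cat; rewrite Hl.
by rewrite last_cat Hl size_cat; split=> //; lia.
Qed.

Lemma dl_edge x y : e x y -> dist_le e x y 1.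
Proof. by move=> H; exists [:: y]. Qed.

Lemma lnp (P : nat -> Prop) : (exists n, P n) -> exists n, P n /\ forall m, P m -> n <= m.
Proof.
move=> [n Hn].
apply: NNPP => Hno.
have H : forall N m, m <= N -> ~ P m.
  elim=> [|N IH] m Hm Pm.
    apply: Hno; exists m; split=> // k _; lia.
  case: (leqP m N) => Hm'; first exact: IH Hm' Pm.
  apply: Hno; exists m; split=> // k Pk; case: (leqP m k) => // Hk.
  exfalso; apply: (IH k) => //; lia.
exact: (H n n (leqnn n) Hn).
Qed.

Lemma geo_min a s b n : geodesic e a s b -> dist_le e a b n -> size s <= n.
Proof.
move=> [_ [_ H]] [q [Hw [Hl Hs]]]; have := H q Hw Hl; lia.
Qed.

Lemma geo_dl a s b : geodesic e a s b -> dist_le e a b (size s).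
Proof. by move=> [Hw [Hl _]]; exists s. Qed.

Lemma geo_ex : connected e -> forall a b, exists s, geodesic e a s b.
Proof.
move=> Hc a b.
have [n [[p [Hw [Hl Hs]]] Hmin]] := lnp (Hc a b).
exists p; split=> //; split=> // q Hq Hlq.
have := Hmin (size q) (ex_intro _ q (conj Hq (conj Hlq (leqnn _)))); lia.
Qed.

Lemma nth_dist a s k : walk e a s -> k <= size s ->
  dist_le e a (nth a (a :: s) k) k /\
  dist_le e (nth a (a :: s) k) (last a s) (size s - k).
Proof.
elim: s a k => [|b s IH] a k /=.
  move=> _ Hk; have -> : k = 0 by lia.
  by split; apply: dl_refl.
move=> [Hab Hw] Hk; case: k Hk => [|k] Hk /=.
  split; first exact: dl_refl.
  by exists (b :: s); split=> //; split=> //; rewrite /=; lia.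
have [H1 H2] := IH b k Hw ltac:(lia).
rewrite /= (set_nth_default b a) /=; last by lia.
split; first by have := dl_trans (dl_edge Hab) H1.
by rewrite subSS.
Qed.

Lemma nth_onpath (a : T) s k : k <= size s -> on_path (nth a (a :: s) k) a s.
Proof.
elim: s a k => [|b s IH] a k /=.
  move=> Hk; have -> : k = 0 by lia. by left.
case: k => [|k] Hk /=; first by left.
rewrite (set_nth_default b a) /=; last by lia.
right; exact: IH.
Qed.

Lemma onpath_split a s r : walk e a s -> on_path r a s ->
  exists k, k <= size s /\ dist_le e a r k /\ dist_le e r (last a s) (size s - k).
Proof.
elim: s a => [|b s IH] a /=.
  move=> _ [->|[]]; exists 0; split=> //; split; exact: dl_refl.
move=> [Hab Hw] [->|Hr].
  exists 0; split=> //; split; first exact: dl_refl.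
  by exists (b :: s); split=> //; split=> //; rewrite /=; lia.
have [k [Hk [H1 H2]]] := IH b Hw Hr.
exists k.+1; split; first by lia.
split; first by have := dl_trans (dl_edge Hab) H1.
by rewrite subSS.
Qed.

Lemma onpath_last (a : T) s : on_path (last a s) a s.
Proof.
elim: s a => [|b s IH] a /=; first by left.
right; exact: IH.
Qed.

Lemma onpath_small (a : T) s r : size s <= 1 -> on_path r a s -> r = a \/ r = last a s.
Proof.
case: s => [|b [|c s]] /=; try lia.
  by move=> _ [->|[]]; left.
by move=> _ [->|[->|[]]]; [left|right].
Qed.

Lemma walk_step a s i : walk e a s -> i < size s ->
  e (nth a (a :: s) i) (nth a (a :: s) i.+1).
Proof.
elim: s a i => [|b s IH] a i //=.
move=> [Hab Hw]; case: i => [|i] Hi /=; first by [].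
rewrite [nth a (b :: s) i](set_nth_default b a) /=; last by lia.
rewrite [nth a s i](set_nth_default b a) /=; last by lia.
exact: (IH b i).
Qed.

Hypothesis esym : forall u v, e u v -> e v u.

Lemma dl_sym x y n : dist_le e x y n -> dist_le e y x n.
Proof.
move=> [p [Hw [Hl Hs]]]; subst y.
elim: p x n Hw Hs => [|b p IH] x n /=.
  by move=> _ _; apply: dl_mono (dl_refl x) _.
move=> [Hxb Hw] Hs.
have := dl_trans (IH b (size p) Hw (leqnn _)) (dl_edge (esym Hxb)).
move=> H; apply: dl_mono H _; lia.
Qed.

Lemma geo_min_sym a s b n : geodesic e a s b -> dist_le e b a n -> size s <= n.
Proof. by move=> Hg /dl_sym; apply: geo_min. Qed.

End Basic.

Definition sF (dl K : nat) := 4 * dl * dl + 8 * dl + 4 * K + 5.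

Section Hyp.
Variables (T : Type) (e : T -> T -> Prop) (dl K : nat) (Y : T -> Prop).
Hypothesis esym : forall u v, e u v -> e v u.
Hypothesis conn : connected e.
Hypothesis hyp : hyperbolic e dl.
Hypothesis qcY : quasiconvex e K Y.

Lemma qc_point a b p q tau m : proj e Y a p -> proj e Y b q ->
  geodesic e p tau q -> on_path m p tau -> exists ym, Y ym /\ dist_le e m ym K.
Proof.
move=> [Yp _] [Yq _] Hg Hm.
have [s [Hs Hd]] := qcY Yp Yq Hg Hm.
by exists s.
Qed.

Lemma CL a b p q tau Q m :
  proj e Y a p -> proj e Y b q -> geodesic e p tau q -> on_path m p tau ->
  (forall n, dist_le e p m n -> 4 * dl + K < n) ->
  (forall n, dist_le e m q n -> 4 * dl + K < n) ->
  geodesic e a Q b ->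
  exists r, on_path r a Q /\ dist_le e m r (2 * dl).
Proof.
move=> Hpa Hqb Htau Hm Hpm Hmq HQ.
have [ym [Yym Hmym]] := qc_point Hpa Hqb Htau Hm.
have [G1 HG1] := geo_ex conn p a.
have [G2 HG2] := geo_ex conn a q.
have [G3 HG3] := geo_ex conn b q.
have [w [Hw Hmw]] := hyp Htau HG1 HG2 Hm.
case: Hw => Hw.
  have [k [Hk [Hpw Hwa]]] := onpath_split (proj1 HG1) Hw.
  rewrite (proj1 (proj2 HG1)) in Hwa.
  have Hay : dist_le e a ym (size G1 - k + dl + K).
    apply: dl_trans _ Hmym; apply: dl_trans (dl_sym esym Hwa) (dl_sym esym Hmw).
  have Hap := proj2 Hpa ym Yym _ Hay.
  have := geo_min_sym esym HG1 Hap.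
  have := Hpm _ (dl_trans Hpw (dl_sym esym Hmw)).
  lia.
have [w' [Hw' Hww']] := hyp HG2 HQ HG3 Hw.
case: Hw' => Hw'.
  exists w'; split=> //; apply: dl_mono (dl_trans Hmw Hww') _; lia.
have [k [Hk [Hbw Hwq]]] := onpath_split (proj1 HG3) Hw'.
rewrite (proj1 (proj2 HG3)) in Hwq.
have Hby : dist_le e b ym (k + dl + dl + K).
  apply: dl_trans _ Hmym; apply: dl_trans (dl_sym esym Hmw).
  exact: dl_trans Hbw (dl_sym esym Hww').
have Hbq := proj2 Hqb ym Yym _ Hby.
have := geo_min HG3 Hbq.
have := Hmq _ (dl_trans (dl_trans Hmw Hww') Hwq).
lia.
Qed.

Lemma idx_exact p tau q k : geodesic e p tau q -> k <= size tau ->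
  on_path (nth p (p :: tau) k) p tau /\ dist_le e p (nth p (p :: tau) k) k /\ dist_le e (nth p (p :: tau) k) q (size tau - k) /\ (forall n, dist_le e p (nth p (p :: tau) k) n -> k <= n) /\ (forall n, dist_le e (nth p (p :: tau) k) q n -> size tau - k <= n).
Proof.
move=> Hg Hk.
have [H1 H2] := nth_dist (proj1 Hg) Hk.
rewrite (proj1 (proj2 Hg)) in H2.
split; first exact: nth_onpath.
split=> //; split=> //; split.
  move=> n Hn; have := geo_min Hg (dl_trans Hn H2); lia.
move=> n Hn; have := geo_min Hg (dl_trans H1 Hn); lia.
Qed.

Lemma near_pair a b p q : (a = b \/ e a b) -> proj e Y a p -> proj e Y b q ->
  dist_le e p q (2 * (4 * dl + K) + 1).
Proof.
move=> Hab Hpa Hqb.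
have [tau Htau] := geo_ex conn p q.
case: (leqP (size tau) (2 * (4 * dl + K) + 1)) => HL.
  exact: dl_mono (geo_dl Htau) HL.
have [Hm [Hpm [Hmq [Epm Emq]]]] := idx_exact Htau (k := (4 * dl + K).+1) ltac:(lia).
set m := nth p (p :: tau) _ in Hm Hpm Hmq Epm Emq.
have [Q HQ] := geo_ex conn a b.
have HQs : size Q <= 1.
  case: Hab => Hab.
    by subst b; apply: geo_min HQ (dl_mono (dl_refl _ _) (isT : 0 <= 1)).
  exact: geo_min HQ (dl_edge Hab).
have [r [Hr Hmr]] := CL Hpa Hqb Htau Hm (fun n H => Epm n H) (fun n H => ltac:(have := Emq n H; lia)) HQ.
have [ym [Yym Hmym]] := qc_point Hpa Hqb Htau Hm.
case: (onpath_small HQs Hr) => Er; last rewrite (proj1 (proj2 HQ)) in Er; subst r.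
  have Hap := proj2 Hpa ym Yym _ (dl_trans (dl_sym esym Hmr) Hmym).
  have := Epm _ (dl_trans (dl_sym esym Hap) (dl_sym esym Hmr)); lia.
have Hbq := proj2 Hqb ym Yym _ (dl_trans (dl_sym esym Hmr) Hmym).
have := Emq _ (dl_trans Hmr Hbq); lia.
Qed.

Lemma near_U (U : T -> Prop) M0 a b p q : quasiconvex e K U ->
  diam_le e (fun v => Y v /\ nbhd e U (2 * K + 2 * dl) v) M0 ->
  U a -> U b -> proj e Y a p -> proj e Y b q ->
  dist_le e p q (M0 + 2 * K + 2 * (4 * dl + K) + 2).
Proof.
move=> qcU Hsep Ua Ub Hpa Hqb.
have [tau Htau] := geo_ex conn p q.
case: (leqP (size tau) (M0 + 2 * K + 2 * (4 * dl + K) + 2)) => HL.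
  exact: dl_mono (geo_dl Htau) HL.
have [Q HQ] := geo_ex conn a b.
have key : forall k, 4 * dl + K < k -> 4 * dl + K < size tau - k ->
   exists ym, Y ym /\ nbhd e U (2 * K + 2 * dl) ym /\ dist_le e (nth p (p :: tau) k) ym K.
  move=> k Hk1 Hk2.
  have [Hm [Hpm [Hmq [Epm Emq]]]] := idx_exact Htau (k := k) ltac:(lia).
  have [r [Hr Hmr]] := CL Hpa Hqb Htau Hm (fun n H => ltac:(have := Epm n H; lia))
     (fun n H => ltac:(have := Emq n H; lia)) HQ.
  have [ym [Yym Hmym]] := qc_point Hpa Hqb Htau Hm.
  have [u [Uu Hru]] := qcU _ _ _ Ua Ub HQ _ Hr.
  exists ym; split=> //; split=> //; exists u; split=> //.
  apply: dl_mono (dl_trans (dl_trans (dl_sym esym Hmym) Hmr) Hru) _; lia.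
have [y1 [Y1 [N1 H1]]] := key (4 * dl + K).+1 ltac:(lia) ltac:(lia).
have [y2 [Y2 [N2 H2]]] := key (size tau - (4 * dl + K).+1) ltac:(lia) ltac:(lia).
have H12 := Hsep y1 y2 (conj Y1 N1) (conj Y2 N2).
have [_ [Hpm1 _]] := idx_exact Htau (k := (4 * dl + K).+1) ltac:(lia).
have [_ [_ [_ [Epm2 _]]]] := idx_exact Htau (k := size tau - (4 * dl + K).+1) ltac:(lia).
have := Epm2 _ (dl_trans (dl_trans (dl_trans Hpm1 H1) H12) (dl_sym esym H2)).
lia.
Qed.


Lemma proj_ex : (exists y0, Y y0) -> forall z, exists p, proj e Y z p.
Proof.
move=> [y0 Y0] z.
have [n0 Hn0] := conn z y0.
have [n [[y [Yy Hy]] Hmin]] := lnp (P := fun n => exists y, Y y /\ dist_le e z y n)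
   (ex_intro _ n0 (ex_intro _ y0 (conj Y0 Hn0))).
exists y; split=> // y' Yy' n' Hn'.
apply: dl_mono Hy _; apply: Hmin; by exists y'.
Qed.

Lemma LP N : forall (v : nat -> T) (P : nat -> T -> Prop), 0 < N ->
  (forall t, t < N -> forall s, geodesic e (v t) s (v t.+1) ->
      forall p, on_path p (v t) s -> P t p) ->
  forall Q c, geodesic e (v 0) Q (v N) -> on_path c (v 0) Q ->
  exists t p, t < N /\ P t p /\ dist_le e c p (dl * t.+1).
Proof.
elim: N => [|N IH] v P HN Hside Q c HQ Hc; first by lia.
have [s0 Hs0] := geo_ex conn (v 0) (v 1).
have [Q' HQ'] := geo_ex conn (v 1) (v N.+1).
have [w [Hw Hcw]] := hyp HQ Hs0 HQ' Hc.
case: Hw => Hw.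
  exists 0, w; split=> //; split; last by rewrite muln1.
  exact (Hside 0 ltac:(lia) s0 Hs0 w Hw).
destruct N as [|N].
  have HQs : size Q' <= 1 by apply: geo_min HQ' (dl_mono (dl_refl _ _) (isT : 0 <= 1)).
  have Ew : w = v 1.
    by case: (onpath_small HQs Hw) => // ->; rewrite (proj1 (proj2 HQ')).
  exists 0, w; split=> //; split; last by rewrite muln1.
  have H1 : on_path (last (v 0) s0) (v 0) s0 by exact: onpath_last.
  rewrite (proj1 (proj2 Hs0)) in H1.
  rewrite Ew; exact (Hside 0 ltac:(lia) s0 Hs0 _ H1).
have [t [p [Ht [Pp Hwp]]]] := IH (fun i => v i.+1) (fun t => P t.+1) ltac:(lia)
  (fun t Ht s Hs p Hp => Hside t.+1 ltac:(lia) s Hs p Hp) Q' w HQ' Hw.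
exists t.+1, p; split; first by lia.
split=> //.
apply: dl_mono (dl_trans Hcw Hwp) _.
by rewrite -mulnS.
Qed.

Lemma PL L N : 0 < L -> forall (v : nat -> T) (P : nat -> T -> Prop), 0 < N ->
  (forall t, t < N -> forall s, geodesic e (v t) s (v t.+1) ->
      forall p, on_path p (v t) s -> P t p) ->
  forall Q c, geodesic e (v 0) Q (v N) -> on_path c (v 0) Q ->
  exists t j p, t < N /\ j * L <= t /\ P t p /\ dist_le e c p (dl * (j + L + 1)).
Proof.
move=> HL; elim/ltn_ind: N => N IH v P HN Hside Q c HQ Hc.
case: (leqP N L) => HNL.
  have [t [p [Ht [Pp Hcp]]]] := LP HN Hside HQ Hc.
  exists t, 0, p; split=> //; split; first by rewrite mul0n.
  split=> //; apply: dl_mono Hcp _; apply: leq_mul => //; lia.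
have [G HG] := geo_ex conn (v 0) (v L).
have [Q' HQ'] := geo_ex conn (v L) (v N).
have [w [Hw Hcw]] := hyp HQ HG HQ' Hc.
case: Hw => Hw.
  have [t [p [Ht [Pp Hwp]]]] := LP HL (fun t Ht s Hs p Hp => Hside t ltac:(lia) s Hs p Hp) HG Hw.
  exists t, 0, p; split; first by lia.
  split; first by rewrite mul0n.
  split=> //; apply: dl_mono (dl_trans Hcw Hwp) _.
  rewrite -mulnS; apply: leq_mul => //; lia.
have HQ'' : geodesic e (v (0 + L)) Q' (v (N - L + L)).
  by rewrite add0n subnK //; lia.
have [t [j [p [Ht [Hj [Pp Hwp]]]]]] := IH (N - L) ltac:(lia) (fun i => v (i + L))
  (fun t => P (t + L)) ltac:(lia)
  (fun t Ht s Hs p Hp => Hside (t + L) ltac:(lia) s ltac:(by rewrite -addSn) p Hp) Q' w HQ'' Hw.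
exists (t + L), j.+1, p; split; first by lia.
split; first by rewrite mulSn; lia.
split=> //; apply: dl_mono (dl_trans Hcw Hwp) _.
rewrite -mulnS; apply: leq_mul => //; lia.
Qed.


Lemma far_lemma (v : nat -> T) N :
  (forall r y', Y y' -> dist_le e (v 0) y' r ->
     exists k, k <= r + K + 2 /\ sF dl K <= 2 * k) ->
  (forall t, t < N -> forall s, geodesic e (v t) s (v t.+1) ->
     forall p, on_path p (v t) s -> forall r y', Y y' -> dist_le e p y' r ->
     exists k, k <= r + K + 2 /\ sF dl K + t <= 2 * k) ->
  forall p q, proj e Y (v 0) p -> proj e Y (v N) q ->
  dist_le e p q (2 * (4 * dl + K) + 1).
Proof.
move=> H0 Hside p q Hp Hq.
have [tau Htau] := geo_ex conn p q.
case: (leqP (size tau) (2 * (4 * dl + K) + 1)) => HL.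
  exact: dl_mono (geo_dl Htau) HL.
have [Hm [Hpm [Hmq [Epm Emq]]]] := idx_exact Htau (k := (4 * dl + K).+1) ltac:(lia).
set m := nth p (p :: tau) _ in Hm Hpm Hmq Epm Emq.
have [Q HQ] := geo_ex conn (v 0) (v N).
have [r [Hr Hmr]] := CL Hp Hq Htau Hm (fun n H => Epm n H)
   (fun n H => ltac:(have := Emq n H; lia)) HQ.
have [ym [Yym Hmym]] := qc_point Hp Hq Htau Hm.
have Hrym : dist_le e r ym (2 * dl + K) := dl_trans (dl_sym esym Hmr) Hmym.
rewrite /sF in H0 Hside.
case: (posnP N) => HN.
  subst N.
  have HQs : size Q <= 1 by apply: geo_min HQ (dl_mono (dl_refl _ _) (isT : 0 <= 1)).
  have Er : r = v 0.
    by case: (onpath_small HQs Hr) => // ->; rewrite (proj1 (proj2 HQ)).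
  subst r.
  have [k [Hk1 Hk2]] := H0 _ _ Yym Hrym.
  exfalso; nia.
have [t [j [p' [Ht [Hj [Pp Hrp]]]]]] := PL (L := 2 * dl + 1) ltac:(lia)
  (P := fun t p => forall r y', Y y' -> dist_le e p y' r ->
     exists k, k <= r + K + 2 /\ 4 * dl * dl + 8 * dl + 4 * K + 5 + t <= 2 * k) HN Hside HQ Hr.
have [k [Hk1 Hk2]] := Pp _ _ Yym (dl_trans (dl_sym esym Hrp) Hrym).
exfalso; nia.
Qed.

End Hyp.

Definition Dm (V : Type) (adj : V -> V -> Prop) (S1 S2 : V -> Prop) C :=
  forall a b, (S1 a \/ S2 a) -> (S1 b \/ S2 b) -> dist_le adj a b C.

Lemma Dm_mono V adj (S1 S2 : V -> Prop) C C' : Dm adj S1 S2 C -> C <= C' -> Dm adj S1 S2 C'.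
Proof. by move=> H HC a b Ha Hb; apply: dl_mono (H a b Ha Hb) HC. Qed.

Lemma Dm_trans V adj (S1 S2 S3 : V -> Prop) C1 C2 :
  (forall u v, adj u v -> adj v u) ->
  Dm adj S1 S2 C1 -> Dm adj S2 S3 C2 -> (exists t, S2 t) -> Dm adj S1 S3 (C1 + C2).
Proof.
move=> asym H1 H2 [t St] a b Ha Hb.
case: Ha => Ha; case: Hb => Hb.
- apply: dl_mono (H1 a b (or_introl Ha) (or_introl Hb)) _; lia.
- exact: dl_trans (H1 a t (or_introl Ha) (or_intror St)) (H2 t b (or_introl St) (or_intror Hb)).
- have H := dl_trans (H2 a t (or_intror Ha) (or_introl St)) (H1 t b (or_intror St) (or_introl Hb)).
  apply: dl_mono H _; lia.
- apply: dl_mono (H2 a b (or_intror Ha) (or_intror Hb)) _; lia.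
Qed.

Section Hat.
Variables (V : Type) (adj : V -> V -> Prop) (dl K M0 : nat) (Ycol : (V -> Prop) -> Prop).
Hypothesis asym : forall u v, adj u v -> adj v u.
Hypothesis airr : forall v, ~ adj v v.
Hypothesis conn : connected adj.
Hypothesis hyp : hyperbolic adj dl.
Hypothesis qcall : forall Y, Ycol Y -> quasiconvex adj K Y.
Hypothesis sep : geometrically_separated adj dl K M0 Ycol.
Variables (Y : coll Ycol) (x y : cone_vertex Ycol) (g : seq (cone_vertex Ycol)).
Hypothesis hx : x <> inr Y.
Hypothesis hy : y <> inr Y.
Hypothesis hg : geodesic (cone_adj adj (Ycol := Ycol)) x g y.
Hypothesis hav : ~ on_path (inr Y) x g.

Local Notation H := (cone_adj adj (Ycol := Ycol)).
Local Notation Bst := (M0 + 2 * K + 2 * (4 * dl + K) + 2).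
Local Notation YY := (sval Y).

Lemma hsym a b : H a b -> H b a.
Proof. by case: a => [a|A]; case: b => [b|B] //=; apply: asym. Qed.

Lemma lift z z' n : dist_le adj z z' n -> dist_le H (inl z) (inl z') n.
Proof.
move=> [p [Hw [Hl Hs]]]; exists (map inl p); split.
  by elim: p z Hw {Hl Hs} => [|b p IH] z //= [Hzb Hw]; split=> //; apply: IH.
by rewrite last_map Hl size_map.
Qed.

Lemma neqY (U : coll Ycol) : inr U <> inr Y :> cone_vertex Ycol -> sval U <> YY.
Proof.
move=> HU E; apply: HU; congr inr.
case: U E => U hU; case: Y => Y0 hY /= E; subst U.
by rewrite (proof_irrelevance _ hU hY).
Qed.

Lemma pairD a b p q :
  (a = b \/ adj a b \/ exists U : coll Ycol, sval U <> YY /\ sval U a /\ sval U b) ->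
  proj adj YY a p -> proj adj YY b q -> dist_le adj p q Bst.
Proof.
have qcY := qcall (proj2_sig Y).
move=> [E|[E|[U [HU [Ua Ub]]]]] Hp Hq.
- apply: dl_mono (near_pair asym conn hyp qcY (or_introl E) Hp Hq) _; lia.
- apply: dl_mono (near_pair asym conn hyp qcY (or_intror E) Hp Hq) _; lia.
- have Hs := sep (proj2_sig Y) (proj2_sig U) (fun E => HU (esym E)).
  have := near_U asym conn hyp qcY (qcall (proj2_sig U)) Hs Ua Ub Hp Hq.
  by [].
Qed.

Lemma nbrR (U : coll Ycol) b : H (inr U) b -> exists u, b = inl u /\ sval U u.
Proof. by case: b => [b|B] //= Hb; exists b. Qed.
Lemma nbrL (U : coll Ycol) a : H a (inr U) -> exists u, a = inl u /\ sval U u.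
Proof. by case: a => [a|A] //= Ha; exists a. Qed.

Local Notation n := (size g).
Definition gam i := nth x (x :: g) i.

Lemma gam0 : gam 0 = x. Proof. by []. Qed.
Lemma gamn : gam n = y.
Proof.
rewrite /gam -(proj1 (proj2 hg)).
have L : forall (s : seq (cone_vertex Ycol)) a d, nth d (a :: s) (size s) = last a s.
  by elim=> [|b s IH] a d //=; rewrite IH.
exact: L.
Qed.

Lemma hstep i : i < n -> H (gam i) (gam i.+1).
Proof. exact: walk_step (proj1 hg). Qed.

Lemma havoid i : i <= n -> gam i <> inr Y.
Proof. by move=> Hi E; apply: hav; rewrite -E; apply: nth_onpath. Qed.

Lemma G1 i j k1 k2 : i <= j -> j <= n ->
  dist_le H (gam i) (inr Y) k1 -> dist_le H (gam j) (inr Y) k2 -> j - i <= k1 + k2.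
Proof.
move=> Hij Hjn H1 H2.
have [Hxi _] := nth_dist (proj1 hg) (leq_trans Hij Hjn).
have [_ Hjy] := nth_dist (proj1 hg) Hjn.
rewrite (proj1 (proj2 hg)) in Hjy.
have Hxy := dl_trans (dl_trans (dl_trans Hxi H1) (dl_sym hsym H2)) Hjy.
have := geo_min hg Hxy; lia.
Qed.


Variable y0 : V.
Hypothesis Yy0 : YY y0.
Hypothesis npos : 0 < n.

Definition xi i : V :=
  match gam i with inl z => z | inr U => epsilon (inhabits y0) (sval U) end.

Lemma xi_prop i : i <= n ->
  gam i = inl (xi i) \/ exists U, gam i = inr U /\ sval U (xi i).
Proof.
move=> Hi; rewrite /xi; case E: (gam i) => [z|U]; first by left.
right; exists U; split=> //; apply: epsilon_spec.
case: (ltnP i n) => Hin.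
  have := hstep Hin; rewrite E => /nbrR [u [_ Hu]]; by exists u.
have Ei : i = (n.-1).+1 by lia.
have := hstep (i := n.-1) ltac:(lia); rewrite -Ei E => /nbrL [u [_ Hu]]; by exists u.
Qed.

Lemma xi1 i r y' : i <= n -> YY y' -> dist_le adj (xi i) y' r ->
  dist_le H (gam i) (inr Y) (r + 2).
Proof.
move=> Hi Yy Hd.
have Hl := dl_trans (lift Hd) (dl_edge (e := H) (x := inl y') (y := inr Y) Yy).
case: (xi_prop Hi) => [E|[U [E HU]]]; rewrite E.
  apply: dl_mono Hl _; lia.
have := dl_trans (dl_edge (e := H) (x := inr U) (y := inl (xi i)) HU) Hl.
move=> H'; apply: dl_mono H' _; lia.
Qed.

Lemma xi2 i : i < n ->
  xi i = xi i.+1 \/ adj (xi i) (xi i.+1) \/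
  exists U : coll Ycol, inr U <> inr Y :> cone_vertex Ycol /\ sval U (xi i) /\ sval U (xi i.+1) /\
     (gam i = inr U \/ gam i.+1 = inr U).
Proof.
move=> Hi.
have Hs := hstep Hi.
have Ha1 := havoid (i := i) ltac:(lia).
have Ha2 := havoid (i := i.+1) ltac:(lia).
case: (xi_prop (i := i) ltac:(lia)) => [E1|[U1 [E1 H1]]];
case: (xi_prop (i := i.+1) ltac:(lia)) => [E2|[U2 [E2 H2]]]; rewrite E1 E2 /= in Hs.
- by right; left.
- right; right; exists U2; rewrite -E2; split=> //; split=> //; split=> //; by right.
- right; right; exists U1; rewrite -E1; split=> //; split=> //; split=> //; by left.
- by [].
Qed.

Lemma small_geo a b s : (a = b \/ adj a b) -> geodesic adj a s b -> size s <= 1.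
Proof.
move=> [<-|E] Hg; first by apply: geo_min Hg (dl_mono (dl_refl _ _) (isT : 0 <= 1)).
exact: geo_min Hg (dl_edge E).
Qed.

Lemma xi3 i a b s p r y' : i < n ->
  (a = xi i /\ b = xi i.+1 \/ a = xi i.+1 /\ b = xi i) ->
  geodesic adj a s b -> on_path p a s -> YY y' -> dist_le adj p y' r ->
  dist_le H (gam i) (inr Y) (r + K + 2) \/ dist_le H (gam i.+1) (inr Y) (r + K + 2).
Proof.
move=> Hi Hab Hg Hp Yy Hd.
have X1 : forall j, (j = i \/ j = i.+1) -> p = xi j ->
    dist_le H (gam i) (inr Y) (r + K + 2) \/ dist_le H (gam i.+1) (inr Y) (r + K + 2).
  move=> j Hj E; subst p.
  case: Hj => Ej; subst j; [left|right]; apply: dl_mono (xi1 _ Yy Hd) _; lia.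
have [ja [Hja Ea]] : exists j, (j = i \/ j = i.+1) /\ a = xi j.
  by case: Hab => [[Ea _]|[Ea _]]; [exists i|exists i.+1]; split=> //; [left|right].
have [jb [Hjb Eb]] : exists j, (j = i \/ j = i.+1) /\ b = xi j.
  by case: Hab => [[_ Eb]|[_ Eb]]; [exists i.+1|exists i]; split=> //; [right|left].
have Hlast : last a s = b := proj1 (proj2 Hg).
case: (xi2 Hi) => [E|[E|[U [HU [U1 [U2 HG]]]]]].
- have Eab : a = b.
    by rewrite Ea Eb; case: Hja => ->; case: Hjb => ->; rewrite ?E.
  have Hs := small_geo (or_introl Eab) Hg.
  case: (onpath_small Hs Hp) => Ep; [exact: (X1 ja Hja (etrans Ep Ea))|rewrite Hlast in Ep; exact: (X1 jb Hjb (etrans Ep Eb))].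
- have Eab : adj a b.
    by case: Hab => [[-> ->]|[-> ->]] //; apply: asym.
  have Hs := small_geo (or_intror Eab) Hg.
  case: (onpath_small Hs Hp) => Ep; [exact: (X1 ja Hja (etrans Ep Ea))|rewrite Hlast in Ep; exact: (X1 jb Hjb (etrans Ep Eb))].
- have Ua : sval U a by case: Hja => Ej; rewrite Ea Ej.
  have Ub : sval U b by case: Hjb => Ej; rewrite Eb Ej.
  have [u [Uu Hpu]] := qcall (proj2_sig U) Ua Ub Hg Hp.
  have Hu : dist_le H (inr U) (inr Y) (r + K + 2).
    have Hl := dl_trans (lift (dl_trans (dl_sym asym Hpu) Hd))
                 (dl_edge (e := H) (x := inl y') (y := inr Y) Yy).
    have := dl_trans (dl_edge (e := H) (x := inr U) (y := inl u) Uu) Hl.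
    move=> H'; apply: dl_mono H' _; lia.
  by case: HG => E; [left|right]; rewrite E.
Qed.

Lemma xipair i j : i <= n -> j <= n -> (j = i \/ j = i.+1) ->
  Dm adj (proj adj YY (xi i)) (proj adj YY (xi j)) Bst.
Proof.
move=> Hi Hj Hij a b Ha Hb.
have gen : forall a' b', (a' = xi i \/ a' = xi j) -> (b' = xi i \/ b' = xi j) ->
    proj adj YY a' a -> proj adj YY b' b -> dist_le adj a b Bst.
  move=> a' b' Ha' Hb' Pa Pb; apply: pairD Pa Pb.
  case: Hij => Ej; subst j.
    by left; case: Ha' => ->; case: Hb' => ->; rewrite ?E.
  case: (xi2 (i := i) ltac:(lia)) => [E|[E|[U [HU [U1 [U2 _]]]]]].
  - by left; case: Ha' => ->; case: Hb' => ->.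
  - case: Ha' => ->; case: Hb' => ->; try by left.
      by right; left.
    by right; left; apply: asym.
  - right; right; exists U; split; first exact: neqY.
    by case: Ha' => ->; case: Hb' => ->.
case: Ha => Ha; case: Hb => Hb.
- exact: gen (or_introl erefl) (or_introl erefl) Ha Hb.
- exact: gen (or_introl erefl) (or_intror erefl) Ha Hb.
- exact: gen (or_intror erefl) (or_introl erefl) Ha Hb.
- exact: gen (or_intror erefl) (or_intror erefl) Ha Hb.
Qed.



Lemma Dm_of (S1 S2 : V -> Prop) C :
  (forall p q, S1 p -> S2 q -> dist_le adj p q C) ->
  Dm adj S1 S1 C -> Dm adj S2 S2 C -> Dm adj S1 S2 C.
Proof.
move=> H12 H1 H2 a b [Ha|Ha] [Hb|Hb].
- exact: H1 (or_introl Ha) (or_introl Hb).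
- exact: H12.
- have := H12 _ _ Hb Ha; exact: (dl_sym asym).
- exact: H2 (or_introl Ha) (or_introl Hb).
Qed.

Lemma xiself i : i <= n -> Dm adj (proj adj YY (xi i)) (proj adj YY (xi i)) Bst.
Proof. by move=> Hi; apply: xipair => //; left. Qed.

Lemma pe z : exists p, proj adj YY z p.
Proof. exact: proj_ex conn (ex_intro _ y0 Yy0) z. Qed.

Lemma hmin : exists w k0, w <= n /\ dist_le H (gam w) (inr Y) k0 /\
  forall i k, i <= n -> dist_le H (gam i) (inr Y) k -> k0 <= k.
Proof.
have [d Hd] := conn (xi 0) y0.
have [k0 [[w [Hw Hk0]] Hmin]] := lnp (P := fun k => exists i, i <= n /\ dist_le H (gam i) (inr Y) k)
  (ex_intro _ (d + 2) (ex_intro _ 0 (conj (leq0n n) (xi1 (leq0n n) Yy0 Hd)))).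
exists w, k0; split=> //; split=> // i k Hi Hk; apply: Hmin; by exists i.
Qed.

Lemma ends_x : Dm adj (proj_hat adj YY x) (proj adj YY (xi 0)) Bst.
Proof.
case: (xi_prop (leq0n n)) => [E|[U [E HU]]].
  rewrite gam0 in E; rewrite E /=; exact: xiself.
rewrite gam0 in E.
have HUY : sval U <> YY by apply: neqY; rewrite -E.
rewrite E.
apply: Dm_of.
- move=> p q [u [Uu Hp]] Hq; apply: pairD Hp Hq; right; right; by exists U.
- move=> p q [[u [Uu Hp]]|[u [Uu Hp]]] [[u' [Uu' Hq]]|[u' [Uu' Hq]]];
  apply: pairD Hp Hq; right; right; by exists U.
- exact: xiself.
Qed.

Lemma ends_y : Dm adj (proj adj YY (xi n)) (proj_hat adj YY y) Bst.
Proof.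
case: (xi_prop (leqnn n)) => [E|[U [E HU]]].
  rewrite gamn in E; rewrite E /=; exact: xiself.
rewrite gamn in E.
have HUY : sval U <> YY by apply: neqY; rewrite -E.
rewrite E.
apply: Dm_of.
- move=> p q Hp [u [Uu Hq]]; apply: pairD Hp Hq; right; right; by exists U.
- exact: xiself.
- move=> p q [[u [Uu Hp]]|[u [Uu Hp]]] [[u' [Uu' Hq]]|[u' [Uu' Hq]]];
  apply: pairD Hp Hq; right; right; by exists U.
Qed.

Lemma middle a0 d : a0 + d <= n ->
  Dm adj (proj adj YY (xi a0)) (proj adj YY (xi (a0 + d))) (d.+1 * Bst).
Proof.
elim: d => [|d IH] Hd.
  rewrite addn0 mul1n; apply: xiself; lia.
have H1 := IH ltac:(lia).
have H2 := xipair (i := a0 + d) (j := a0 + d.+1) ltac:(lia) Hd (or_intror (addnS _ _)).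
apply: Dm_mono (Dm_trans asym H1 H2 (pe _)) _.
rewrite (mulSn d.+1); lia.
Qed.

Lemma main_hat :
  Dm adj (proj_hat adj YY x) (proj_hat adj YY y) ((2 * sF dl K + 5) * Bst).
Proof.
have qcY := qcall (proj2_sig Y).
have [w [k0 [Hw [Hk0 Hmin]]]] := hmin.
have far_i : forall i k, i <= n -> dist_le H (gam i) (inr Y) k -> i - w <= 2 * k /\ w - i <= 2 * k.
  move=> i k Hi Hk; have := Hmin i k Hi Hk.
  case: (leqP i w) => Hiw.
    have := G1 Hiw Hw Hk Hk0; lia.
  have := G1 (ltnW Hiw) Hi Hk0 Hk; lia.
set s := sF dl K.
have head : Dm adj (proj adj YY (xi 0)) (proj adj YY (xi (w - s))) Bst.
  case: (leqP s w) => Hsw; last first.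
    have -> : w - s = 0 by lia.
    exact: xiself.
  apply: Dm_of; [|exact: xiself|apply: xiself; lia].
  move=> p q Hp Hq; apply: (dl_sym asym).
  have HF := far_lemma asym conn hyp qcY (v := fun t => xi (w - s - t)) (N := w - s).
  simpl in HF; rewrite subn0 subnn in HF.
  suff : dist_le adj q p (2 * (4 * dl + K) + 1) by move=> HH; apply: (dl_mono HH); lia.
  apply: HF Hq Hp.
  + move=> r y' Yy Hd; exists (r + 2); split; first lia.
    have := far_i _ _ (ltac:(lia) : w - s <= n) (xi1 (ltac:(lia) : w - s <= n) Yy Hd); lia.
  + move=> t Ht sg Hg p' Hp' r y' Yy Hd.
    have Ei : w - s - t = (w - s - t.+1).+1 by lia.
    rewrite Ei in Hg Hp'.
    case: (xi3 (i := w - s - t.+1) ltac:(lia) (or_intror (conj erefl erefl)) Hg Hp' Yy Hd) => Hk;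
      exists (r + K + 2); split=> //.
      have := far_i _ _ (ltac:(lia) : w - s - t.+1 <= n) Hk; rewrite /s; lia.
    have := far_i _ _ (ltac:(lia) : (w - s - t.+1).+1 <= n) Hk; rewrite /s; lia.
have tail : Dm adj (proj adj YY (xi (minn (w + s) n))) (proj adj YY (xi n)) Bst.
  case: (leqP (w + s) n) => Hsn; last first.
    exact: xiself.
  apply: Dm_of; [|apply: xiself; lia|exact: xiself].
  move=> p q Hp Hq.
  have HF := far_lemma asym conn hyp qcY (v := fun t => xi (w + s + t)) (N := n - (w + s)).
  simpl in HF; rewrite addn0 subnKC // in HF.
  suff : dist_le adj p q (2 * (4 * dl + K) + 1) by move=> HH; apply: (dl_mono HH); lia.
  apply: HF Hp Hq.
  + move=> r y' Yy Hd; exists (r + 2); split; first lia.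
    have := far_i _ _ Hsn (xi1 Hsn Yy Hd); lia.
  + move=> t Ht sg Hg p' Hp' r y' Yy Hd.
    rewrite addnS in Hg.
    case: (xi3 (i := w + s + t) ltac:(lia) (or_introl (conj erefl erefl)) Hg Hp' Yy Hd) => Hk;
      exists (r + K + 2); split=> //.
      have := far_i _ _ (ltac:(lia) : w + s + t <= n) Hk; rewrite /s; lia.
    have := far_i _ _ (ltac:(lia) : (w + s + t).+1 <= n) Hk; rewrite /s; lia.
have mid := middle (a0 := w - s) (d := minn (w + s) n - (w - s)) ltac:(lia).
have Ea : w - s + (minn (w + s) n - (w - s)) = minn (w + s) n by lia.
rewrite Ea in mid.
have T1 := Dm_trans asym ends_x head (pe _).
have T2 := Dm_trans asym T1 mid (pe _).
have T3 := Dm_trans asym T2 tail (pe _).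
have T4 := Dm_trans asym T3 ends_y (pe _).
apply: Dm_mono T4 _.
have Hd : minn (w + s) n - (w - s) <= 2 * s by lia.
move: Hd; set d := minn (w + s) n - (w - s); set B := (M0 + _ + _ + _) => Hd.
have : d.+1 * B <= (2 * s).+1 * B by apply: leq_mul.
lia.
Qed.

End Hat.
Unset Implicit Arguments.
Set Strict Implicit.

Theorem lemma2p13 :
  exists a b : nat -> nat -> nat,
    (forall delta K, 0 < a delta K /\ 0 < b delta K) /\
    forall (V : Type) (adj : V -> V -> Prop) (delta K M0 : nat)
           (Ycol : (V -> Prop) -> Prop),
      (forall u v, adj u v -> adj v u) ->
      (forall v, ~ adj v v) ->
      connected adj ->
      hyperbolic adj delta ->
      (forall Y, Ycol Y -> quasiconvex adj K Y) ->
      geometrically_separated adj delta K M0 Ycol ->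
      forall (Y : coll Ycol) (x y : cone_vertex Ycol) (g : seq (cone_vertex Ycol)),
        x <> inr Y -> y <> inr Y ->
        geodesic (cone_adj adj (Ycol := Ycol)) x g y ->
        ~ on_path (inr Y) x g ->
        dpi_le adj (sval Y) x y (a delta K * M0 + b delta K).
Proof.
exists (fun dl K => 2 * sF dl K + 5), (fun dl K => (2 * sF dl K + 5) * (2 * K + 2 * (4 * dl + K) + 2)).
split.
  move=> dl K; split; first lia.
  by rewrite muln_gt0; apply/andP; split; lia.
move=> V adj dl K M0 Ycol asym airr conn hyp qcall sep Y x y g hx hy hg hav.
have Hbound : (2 * sF dl K + 5) * (M0 + 2 * K + 2 * (4 * dl + K) + 2) <=
   (2 * sF dl K + 5) * M0 + (2 * sF dl K + 5) * (2 * K + 2 * (4 * dl + K) + 2).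
  rewrite -mulnDr; apply: leq_mul => //; lia.
have PY : forall (c : cone_vertex Ycol) a, proj_hat adj (sval Y) c a -> sval Y a.
  by move=> [c|U] a /=; [case|case=> u [_ []]].
case: (classic (exists y0, sval Y y0)) => [[y0 Yy0]|HY]; last first.
  move=> a b [Ha|Ha]; exfalso; apply: HY; exists a; exact: PY Ha.
case: (posnP (size g)) => Hn.
  have Exy : y = x.
    rewrite -(proj1 (proj2 hg)); by move: Hn; case: g {hg hav}.
  subst y.
  suff : Dm adj (proj_hat adj (sval Y) x) (proj_hat adj (sval Y) x)
            (M0 + 2 * K + 2 * (4 * dl + K) + 2).
    move=> HD; apply: Dm_mono HD _; apply: leq_trans Hbound.
    apply: leq_pmull; lia.
  clear hg hav hy; case: x hx => [z|U] hx.
    by move=> a b [Ha|Ha] [Hb|Hb]; apply: (pairD asym conn hyp qcall sep) Ha Hb; left.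
  have HUY := neqY hx.
  move=> a b [[u [Uu Ha]]|[u [Uu Ha]]] [[u' [Uu' Hb]]|[u' [Uu' Hb]]];
  apply: (pairD asym conn hyp qcall sep) Ha Hb; right; right; by exists U.
have := main_hat asym conn hyp qcall sep hx hy hg hav Yy0 Hn.
move=> HD; apply: Dm_mono HD _; exact: Hbound.
Qed.
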